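(* Let $p$ be a prime and let $G$ be a group of order $p^7$ and nilpotency class $4$ such that $\gamma_2(G)$ is elementary abelian of order $p^5$. Then $\operatorname{Z}(G) = \gamma_4(G)$, and this subgroup has order $p^2$.
   Context: $\gamma_i(G)$ denotes the $i$-th term of the lower central series of $G$ and $\operatorname{Z}(G)$ its center. *)

(* Defs.v *)
From mathcomp Require Import all_boot all_fingroup all_solvable.

(* Main.v *)
Require Import Defs.
From mathcomp Require Import all_boot all_fingroup all_solvable.
From mathcomp Require Import zify.
Set Implicit Arguments.
Unset Strict Implicit.
Unset Printing Implicit Defensive.
Local Open Scope group_scope.

Section Psi.
Variables (gT : finGroupType) (G A K : {group gT}) (u : gT).
Hypotheses (sAG : A \subset G) (nAG : G \subset 'N(A)) (abA : abelian A)
  (Au : u \in A) (nKG : G \subset 'N(K))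
  (hc : forall g h, g \in G -> h \in G -> [~ [~ u, g], h] \in K).

Definition psi g := coset K [~ u, g].

Lemma psi_inA g : g \in G -> [~ u, g] \in A.
Proof.
move=> Gg; rewrite commgEl groupM ?groupV //.
by rewrite memJ_norm // (subsetP nAG).
Qed.

Lemma psiM : {in G &, {morph psi : a b / a * b}}.
Proof.
move=> a b Ga Gb; rewrite /psi commgMJ conjg_mulR.
have Gu : u \in G by apply: (subsetP sAG).
have Nk x : x \in G -> x \in 'N(K) by apply: (subsetP nKG).
have GA x : x \in A -> x \in G by apply: (subsetP sAG).
have Aua := psi_inA Ga; have Aub := psi_inA Gb.
have cM x y : x \in G -> y \in G -> coset K (x * y) = coset K x * coset K y.
  by move=> Gx Gy; rewrite morphM ?Nk.
have Gua : [~ u, a] \in G by rewrite groupR.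
have Gub : [~ u, b] \in G by rewrite groupR.
have Guab : [~ u, a, b] \in G by rewrite !groupR.
rewrite (cM _ _ Gub (groupM Gua Guab)) (cM _ _ Gua Guab).
rewrite (coset_id (hc Ga Gb)) mulg1 -!cM //.
by congr (coset K _); apply: (centsP abA).
Qed.

Canonical psi_morphism := Morphism psiM.

Lemma psi_ker : A \subset 'ker psi_morphism.
Proof.
apply/subsetP=> a Aa; have Ga : a \in G by apply: (subsetP sAG).
apply/kerP=> //=; rewrite /psi.
have /commgP/eqP -> : commute u a by apply: (centsP abA).
exact: coset_id (group1 K).
Qed.

Lemma card_psi_im (B : {group gT}) : A \subset B -> B \subset 'ker psi_morphism ->
  B \subset G -> #|psi_morphism @* G| <= #|G : B|.
Proof.
move=> sAB sBk sBG; rewrite card_morphim setIid.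
by apply: dvdn_leq; [apply: indexg_gt0 | apply: indexgS].
Qed.

Lemma psi_gen (N M : {group gT}) : N \subset <[u]> * M -> M \subset A -> 
  N \subset G -> M \subset G -> [~: M, G] \subset K ->
  [~: N, G] / K \subset psi_morphism @* G.
Proof.
move=> sNuM sMA sNG sMG sMGK.
have Gu : u \in G by apply: (subsetP sAG).
have Nk x : x \in G -> x \in 'N(K) by apply: (subsetP nKG).
rewrite quotient_gen; last first.
  apply/subsetP=> _ /imset2P[n g Nn Gg ->]; apply: Nk; rewrite groupR //.
  exact: (subsetP sNG).
rewrite gen_subG; apply/subsetP=> _ /morphimP[_ _ /imset2P[n g Nn Gg ->] ->].
have /imset2P[v t /cycleP[i ->] Mt ->] := subsetP sNuM n Nn.
have At : t \in A by apply: (subsetP sMA).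
have Gt : t \in G by apply: (subsetP sMG).
have Aui0 : u ^+ i \in A by rewrite groupX.
have Aui : [~ u ^+ i, g] \in A.
  rewrite commgEl groupM ?groupV ?groupX ?memJ_norm ?(subsetP nAG) //.
rewrite commMgJ.
have -> : [~ u ^+ i, g] ^ t = [~ u ^+ i, g].
  by apply/conjg_fixP/commgP; apply: (centsP abA).
have Gui : u ^+ i \in G by rewrite groupX.
rewrite (morphM _ (Nk _ (groupR Gui Gg)) (Nk _ (groupR Gt Gg))).
have -> : coset_morphism K [~ t, g] = 1.
  exact: (coset_id (subsetP sMGK _ (mem_commg Mt Gg))).
rewrite mulg1.
rewrite commXg; last by apply: (centsP abA) => //; apply: psi_inA.
rewrite (morphX _ i (Nk _ (groupR Gu Gg))).
have -> : coset_morphism K [~ u, g] ^+ i = psi_morphism (g ^+ i) by rewrite morphX.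
by rewrite mem_morphim ?groupX.
Qed.

Lemma psi_card (N M B : {group gT}) : N \subset <[u]> * M -> M \subset A ->
  N \subset G -> M \subset G -> [~: M, G] \subset K ->
  A \subset B -> B \subset 'ker psi_morphism -> B \subset G ->
  #|[~: N, G] / K| <= #|G : B|.
Proof.
move=> h1 h2 h3 h4 h5 h6 h7 h8.
exact: leq_trans (subset_leq_card (psi_gen h1 h2 h3 h4 h5)) (card_psi_im h6 h7 h8).
Qed.

Lemma psi_elt (N M : {group gT}) v : N \subset <[u]> * M -> M \subset A ->
  N \subset G -> M \subset G -> [~: M, G] \subset K ->
  v \in [~: N, G] -> exists2 s, s \in G & v \in K :* [~ u, s].
Proof.
move=> h1 h2 h3 h4 h5 Nv.
have sNG : [~: N, G] \subset G by rewrite comm_subG.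
have Gv : v \in G by apply: (subsetP sNG).
have Nk x : x \in G -> x \in 'N(K) by apply: (subsetP nKG).
have Gu : u \in G by apply: (subsetP sAG).
have := subsetP (psi_gen h1 h2 h3 h4 h5) (coset K v) (mem_quotient _ Nv).
case/morphimP=> s _ Gs E; exists s => //.
by apply/rcoset_kercosetP; rewrite ?Nk ?groupR.
Qed.

End Psi.
Lemma comm_swap (gT : finGroupType) (G A : {group gT}) (c s w : gT) :
  A \subset G -> G \subset 'N(A) -> abelian A -> c \in A -> s \in G -> w \in G ->
  [~ s, w] \in A -> [~ c, s, w] = [~ c, w, s].
Proof.
move=> sAG nAG abA Ac Gs Gw Asw.
have cA x y : x \in A -> y \in A -> x * y = y * x by move=> Ax Ay; apply: (centsP abA).
have AJ x g : x \in A -> g \in G -> x ^ g \in A.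
  by move=> Ax Gg; rewrite memJ_norm // (subsetP nAG).
have E : c ^ (s * w) = c ^ (w * s).
  rewrite (commgC s w) conjgM; apply/conjg_fixP/commgP.
  by apply: cA => //; rewrite AJ ?groupM.
have swap x y z : x \in A -> y \in A -> z \in A -> x * z * y = y * z * x.
  move=> Ax Ay Az; rewrite -mulgA (cA z y) // mulgA (cA x y) // -mulgA (cA x z) //.
  by rewrite mulgA.
have H1 x y : (c^-1 * c ^ x) ^ y = (c ^ y)^-1 * c ^ (x * y).
  by rewrite conjMg conjVg conjgM.
have H2 y : (c^-1 * y)^-1 = y^-1 * c by rewrite invMg invgK.
rewrite !commgEl H1 H1 E !H2.
have A1 : (c ^ s)^-1 \in A by rewrite groupV AJ.
have A2 : (c ^ w)^-1 \in A by rewrite groupV AJ.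
by rewrite !mulgA (swap _ _ _ A1 A2 Ac).
Qed.
Section Count.
Variables (gT : finGroupType) (p n : nat) (G : {group gT}).
Hypotheses (pr_p : prime p) (cardG : #|G| = (p ^ n)%N).

Lemma p_dvd_idx (H K : {group gT}) : H \proper K -> K \subset G -> p %| #|K : H|.
Proof.
move=> pHK sKG.
have : #|K : H| %| p ^ n by rewrite -cardG (dvdn_trans (dvdn_indexg K H)) ?cardSg.
case/(dvdn_pfactor _ _ pr_p)=> [[|m]] _ E.
  by move: pHK; rewrite properE -(indexg_eq1 K H) E expn0 eqxx andbF.
by rewrite E expnS dvdn_mulr.
Qed.

Lemma idx_le (A H : {group gT}) : #|G : A| = (p ^ 2)%N -> A \proper H -> H \subset G ->
  #|G : H| <= p.
Proof.
move=> iA pAH sHG.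
have sAH := proper_sub pAH.
have := Lagrange_index sHG sAH; rewrite iA.
case/dvdnP: (p_dvd_idx pAH sHG) => k ->.
have p0 := prime_gt0 pr_p.
move: (#|G : H|) => a; rewrite expnS expn1 => E.
have E2 : ((a * k) * p = p * p)%N by rewrite -E; lia.
have E3 : (a * k = p)%N by apply/eqP; rewrite -(eqn_pmul2r p0) E2.
case: k E3 {E E2} => [|k]; first by rewrite muln0 => E0; move: p0; rewrite -E0.
by move=> <-; rewrite leq_pmulr.
Qed.

Lemma idx_chain (A H1 H2 : {group gT}) : #|G : A| = (p ^ 2)%N -> A \proper H1 ->
  H1 \proper H2 -> H2 \subset G -> H2 :=: G.
Proof.
move=> iA p1 p2 sG.
have s1 := proper_sub p1; have s2 := proper_sub p2.
have := Lagrange_index sG (subset_trans s1 s2); rewrite iA.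
rewrite -(Lagrange_index s2 s1).
case/dvdnP: (p_dvd_idx p1 (subset_trans s2 sG)) => k ->.
case/dvdnP: (p_dvd_idx p2 sG) => j ->.
have p0 := prime_gt0 pr_p.
move=> E.
have : #|G : H2| == 1%N.
  move: (#|G : H2|) E => a; rewrite expnS expn1 => E.
  have E2 : ((a * j * k) * (p * p) = 1 * (p * p))%N by rewrite mul1n -E; nia.
  have E3 : (a * j * k = 1)%N.
    apply/eqP; have pp0 : (0 < p * p)%N by rewrite muln_gt0 p0.
    by rewrite -(eqn_pmul2r pp0) E2.
  by move/eqP: E3; rewrite !muln_eq1; case/andP; case/andP.
rewrite indexg_eq1 => sGH2.
by apply/eqP; rewrite eqEsubset sG sGH2.
Qed.

Lemma fill (N K : {group gT}) (c : gT) : #|N : K| = p -> K \subset N -> N \subset 'N(K) ->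
  c \in N -> c \notin K -> N \subset <[c]> * K.
Proof.
move=> iNK sKN nKN Nc nKc.
have ncK : <[c]> \subset 'N(K) by rewrite cycle_subG (subsetP nKN).
rewrite -norm_joinEl //.
have sJN : <[c]> <*> K \subset N by rewrite join_subG cycle_subG Nc.
have sKJ : K \subset <[c]> <*> K := joing_subr _ _.
have : #|<[c]> <*> K : K| %| p by rewrite -iNK indexSg.
have ne1 : #|<[c]> <*> K : K| != 1%N.
  rewrite indexg_eq1; apply/negP=> sJK; case/negP: nKc; apply: (subsetP sJK).
  by apply: (subsetP (joing_subl _ _)); rewrite cycle_id.
move/(prime_nt_dvdP pr_p ne1) => iJ.
have cJ : #|<[c]> <*> K| = #|N| by rewrite -(Lagrange sKN) -(Lagrange sKJ) iJ iNK.
have /eqP E : <[c]> <*> K == N :> {set gT} by rewrite eqEcard sJN cJ leqnn.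
by rewrite E.
Qed.
End Count.

Theorem lemma4p1 (p : nat) (gT : finGroupType) (G : {group gT}) :
  prime p ->
  #|G| = (p ^ 7)%N ->
  nil_class G = 4 ->
  p.-abelem 'L_2(G) ->
  #|'L_2(G)| = (p ^ 5)%N ->
  'Z(G) = 'L_4(G) /\ #|'L_4(G)| = (p ^ 2)%N.
Proof.
move=> pr_p cardG cl4 abL2 cardL2.
have p0 := prime_gt0 pr_p.
have p1 := prime_gt1 pr_p.
have pG : p.-group G by rewrite /pgroup cardG pnatX pnat_id.
have nilG : nilpotent G := pgroup_nil pG.
have L5 : 'L_5(G) = 1 by apply/(lcn_nil_classP 4 nilG); rewrite cl4.
have L5' : gval ('L_5(G))%G = 1 := L5.
have L4n1 : 'L_4(G) != 1.
  by apply/eqP=> /(lcn_nil_classP 3 nilG); rewrite cl4.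
have abA : abelian 'L_2(G) := abelem_abelian abL2.
have sAG : 'L_2(G) \subset G := lcn_sub 2 G.
have nAG : G \subset 'N('L_2(G)) := lcn_norm 2 G.
have sL n : 'L_n(G) \subset G := lcn_sub n G.
have nL n : G \subset 'N('L_n(G)) := lcn_norm n G.
have sLS n : 'L_n.+1(G) \subset 'L_n(G) := lcn_subS n G.
have prop n : 'L_n.+1(G) != 1 -> 'L_n.+2(G) \proper 'L_n.+1(G).
  move=> ne; apply: nil_comm_properl nilG (lcn_sub _ _) ne _.
  by rewrite subsetI subxx lcn_norm.
have ne1S n : 'L_n.+1(G) != 1 -> 'L_n(G) != 1.
  by move=> ne; apply: contraNneq ne => E; rewrite -subG1 -E sLS.
have L3n1 := ne1S 3 L4n1.
have L2n1 := ne1S 2 L3n1.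
have G1 := ne1S 1%N L2n1.
have L4c : 'L_4(G) \subset 'C(G) by apply/commG1P; exact: L5.
have nab : ~~ abelian G by rewrite -nil_class1 cl4.
have iA : #|G : 'L_2(G)| = (p ^ 2)%N.
  have p5 : (0 < p ^ 5)%N by rewrite expn_gt0 p0.
  apply/eqP; rewrite -(eqn_pmul2l p5) -{1}cardL2 (Lagrange sAG).
  by rewrite cardG -expnD.
have pAG : 'L_2(G) \proper G := prop 0%N G1.
have H0 x : x \in G -> <[x]> <*> 'L_2(G) != G :> {set gT}.
  move=> Gx; apply/eqP=> E; case/negP: nab.
  apply: cyclic_abelian; apply: (cyclic_nilpotent_quo_der1_cyclic nilG).
  have cq : cyclic ((<[x]> <*> 'L_2(G)) / 'L_2(G)).
    rewrite quotientYidr ?cycle_subG ?(subsetP nAG) //.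
    by rewrite quotient_cycle ?cycle_cyclic ?(subsetP nAG).
  by move: cq; rewrite [X in cyclic (X / _)]E.
have APhi : 'L_2(G) \subset 'Phi(G) by rewrite (Phi_joing pG) joing_subl.
have H1 x y : x \in G -> y \in G -> x \notin 'L_2(G) -> y \notin <[x]> <*> 'L_2(G) ->
    <[y]> <*> <[x]> = G :> {set gT}.
  move=> Gx Gy nAx nXy.
  have sX : <[x]> <*> 'L_2(G) \subset G by rewrite join_subG cycle_subG Gx sAG.
  have sY : <[y]> <*> (<[x]> <*> 'L_2(G)) \subset G by rewrite join_subG cycle_subG Gy sX.
  have pAX : 'L_2(G) \proper <[x]> <*> 'L_2(G).
    apply/properP; split; first exact: joing_subr.
    by exists x => //; apply: (subsetP (joing_subl _ _)); rewrite cycle_id.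
  have pXY : <[x]> <*> 'L_2(G) \proper <[y]> <*> (<[x]> <*> 'L_2(G)).
    apply/properP; split; first exact: joing_subr.
    by exists y => //; apply: (subsetP (joing_subl _ _)); rewrite cycle_id.
  have E := idx_chain pr_p cardG iA pAX pXY sY.
  have E2 : 'Phi(G) <*> (<[y]> <*> <[x]>) = G.
    apply/eqP; rewrite eqEsubset !join_subG Phi_sub !cycle_subG Gx Gy /=.
    have sYX : <[y]> <*> <[x]> \subset 'Phi(G) <*> (<[y]> <*> <[x]>) := joing_subr _ _.
    rewrite -{1}E !join_subG !cycle_subG; apply/and3P; split.
    - by apply: (subsetP sYX); apply: (subsetP (joing_subl _ _)); rewrite cycle_id.
    - by apply: (subsetP sYX); apply: (subsetP (joing_subr _ _)); rewrite cycle_id.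
    exact: subset_trans APhi (joing_subl _ _).
  by rewrite -(Phi_nongen E2) genGid.
have [x Gx nAx] : exists2 x, x \in G & x \notin 'L_2(G) by case/properP: pAG.
have pXG : <[x]> <*> 'L_2(G) \proper G by rewrite properEneq H0 // join_subG cycle_subG Gx sAG.
have [y Gy nXy] : exists2 y, y \in G & y \notin <[x]> <*> 'L_2(G) by case/properP: pXG.
have GE := H1 x y Gx Gy nAx nXy.
have nL3 z : z \in G -> z \in 'N('L_3(G)) := @subsetP _ _ _ (nL 3) z.
have QE : G / 'L_3(G) = <[coset 'L_3(G) y]> <*> <[coset 'L_3(G) x]>.
  by rewrite -[X in X / _]GE quotientY ?cycle_subG ?nL3 // !quotient_cycle ?nL3.
have Dq : 'L_2(G) / 'L_3(G) = <[ coset 'L_3(G) [~ y, x] ]>.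
  have := der1_joing_cycles (x := coset 'L_3(G) y) (y := coset 'L_3(G) x).
  rewrite /= -QE -(morphR (coset_morphism _)) ?nL3 // -(quotient_der 1 (nL 3)).
  apply; apply: (subsetP (subset_trans (lcn_central 2 G) (subsetIr _ _))).
  exact: mem_quotient (mem_commg Gy Gx).
have iA3 : #|'L_2(G) : 'L_3(G)| = p.
  have le : #|'L_2(G) : 'L_3(G)| <= p.
    rewrite -card_quotient ?(subset_trans sAG (nL 3)) // Dq.
    apply: dvdn_leq p0 _.
    apply: dvdn_trans (morph_order (coset_morphism 'L_3(G)) (nL3 _ (groupR Gy Gx))) _.
    case: (eqVneq [~ y, x] 1) => [-> | ne]; first by rewrite order1 dvd1n.
    by rewrite (abelem_order_p abL2 (mem_commg Gy Gx) ne).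
  have dv : p %| #|'L_2(G) : 'L_3(G)| := p_dvd_idx pr_p cardG (prop 1%N L2n1) sAG.
  by apply/eqP; rewrite eqn_leq le dvdn_leq ?indexg_gt0.
have cL3 : #|'L_3(G)| = (p ^ 4)%N.
  have := Lagrange (sLS 2%N); rewrite iA3 cardL2 => E.
  by apply/eqP; rewrite -(eqn_pmul2r p0) E -expnSr.
have [c Ac nL3c] : exists2 c, c \in 'L_2(G) & c \notin 'L_3(G).
  by case/properP: (prop 1%N L2n1).
have nA3 : 'L_2(G) \subset 'N('L_3(G)) := subset_trans sAG (nL 3).
have fA : 'L_2(G) \subset <[c]> * 'L_3(G) := fill pr_p iA3 (sLS 2%N) nA3 Ac nL3c.
have hcC g h : g \in G -> h \in G -> [~ c, g, h] \in 'L_4(G).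
  by move=> Gg Gh; apply: mem_commg (mem_commg Ac Gg) Gh.
have s34 : [~: 'L_3(G), G] \subset 'L_4(G) := subxx _.
have b1 : #|'L_3(G) : 'L_4(G)| <= p ^ 2.
  rewrite -card_quotient ?(subset_trans (sL 3) (nL 4)) // -iA.
  exact: (psi_card fA (sLS 2%N) sAG (sL 3) s34 (subxx _) (psi_ker sAG nAG abA Ac (nL 4) hcC) sAG).
have dv34 : p %| #|'L_3(G) : 'L_4(G)| := p_dvd_idx pr_p cardG (prop 2%N L3n1) (sL 3).
have [m _ Em] : exists2 m, m <= 4 & #|'L_3(G) : 'L_4(G)| = (p ^ m)%N.
  by apply/dvdn_pfactor; rewrite // -cL3 dvdn_indexg.
have iL34 : #|'L_3(G) : 'L_4(G)| = (p ^ 2)%N.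
  case: m Em => [|[|[|m]]] Em //.
  - by move: dv34; rewrite Em expn0 dvdn1 => /eqP p_1; move: p1; rewrite p_1.
  - have [d L3d nL4d] : exists2 d, d \in 'L_3(G) & d \notin 'L_4(G).
      by case/properP: (prop 2%N L3n1).
    have Ad : d \in 'L_2(G) := subsetP (sLS 2%N) d L3d.
    have nA4 : 'L_3(G) \subset 'N('L_4(G)) := subset_trans (sL 3) (nL 4).
    have fD : 'L_3(G) \subset <[d]> * 'L_4(G) := fill pr_p Em (sLS 3) nA4 L3d nL4d.
    have hcD g h : g \in G -> h \in G -> [~ d, g, h] \in 'L_5(G).
      by move=> Gg Gh; apply: mem_commg (mem_commg L3d Gg) Gh.
    have : #|'L_4(G) / 'L_5(G)| <= #|G : 'L_2(G)|.
      exact: (@psi_card _ _ _ _ _ sAG nAG abA Ad (nL 5) hcD _ _ _ fD (subset_trans (sLS 3) (sLS 2%N)) (sL 3) (sL 4) (subxx _) (subxx _)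
      (psi_ker sAG nAG abA Ad (nL 5) hcD) sAG).
    rewrite card_quotient ?(subset_trans (sL 4) (nL 5)) // L5' indexg1 iA.
    have := Lagrange (sLS 3); rewrite Em cL3 expn1 => E.
    have -> : #|'L_4(G)| = (p ^ 3)%N by apply/eqP; rewrite -(eqn_pmul2r p0) E -expnSr.
    by rewrite leq_exp2l.
  - by move: b1; rewrite Em leq_exp2l.
have cL4 : #|'L_4(G)| = (p ^ 2)%N.
  have := Lagrange (sLS 3); rewrite iL34 cL3 => E.
  have p2 : (0 < p ^ 2)%N by rewrite expn_gt0 p0.
  by apply/eqP; rewrite -(eqn_pmul2r p2) E -expnD.
split=> //.
have sL4Z : 'L_4(G) \subset 'Z(G) by rewrite subsetI sL L4c.
have Gl v : v \in 'L_4(G) -> forall g, g \in G -> [~ v, g] = 1.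
  by move=> L4v g Gg; apply/eqP/commgP; apply: (centP (subsetP L4c v L4v)).
apply/eqP; rewrite eqEsubset sL4Z andbT; apply/subsetP=> z Zz.
have Gz : z \in G := subsetP (center_sub G) z Zz.
have zCG : z \in 'C(G) := subsetP (subsetIr _ _) z Zz.
have zcomm g : g \in G -> [~ z, g] = 1.
  by move=> Gg; apply/eqP/commgP; apply: (centP zCG).
have Az : z \in 'L_2(G).
  apply/negPn/negP => nAz.
  have pZG : <[z]> <*> 'L_2(G) \proper G.
    by rewrite properEneq H0 // join_subG cycle_subG Gz sAG.
  have [_ [t Gt nZt]] := properP pZG.
  have GE2 := H1 z t Gz Gt nAz nZt.
  case/negP: nab; rewrite -GE2 abelianY !cycle_abelian /= cycle_subG.
  have stG : <[t]> \subset G by rewrite cycle_subG.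
  exact: (subsetP (centS stG) z zCG).
have L3z : z \in 'L_3(G).
  apply/negPn/negP => n3z.
  have fZ : 'L_2(G) \subset <[z]> * 'L_3(G) := fill pr_p iA3 (sLS 2%N) nA3 Az n3z.
  have hcZ g h : g \in G -> h \in G -> [~ z, g, h] \in 'L_4(G).
    by move=> Gg Gh; apply: mem_commg (mem_commg Az Gg) Gh.
  have kerG : G \subset 'ker (psi_morphism sAG nAG abA Az (nL 4) hcZ).
    apply/subsetP => g Gg; apply/kerP => //=; rewrite /psi zcomm //.
    exact: coset_id (group1 _).
  have : #|'L_3(G) / 'L_4(G)| <= #|G : G|.
    exact: (@psi_card _ _ _ _ _ sAG nAG abA Az (nL 4) hcZ _ _ _ fZ (sLS 2%N) sAG (sL 3) s34 sAG kerG (subxx _)).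
  rewrite card_quotient ?(subset_trans (sL 3) (nL 4)) // indexgg iL34.
  by rewrite -(expn0 p) leq_exp2l.
apply/negPn/negP => n4z.
have [w Gw zw] := psi_elt sAG nAG abA Ac (nL 4) hcC fA (sLS 2%N) sAG (sL 3) s34 L3z.
case/rcosetP: zw => l L4l zE.
have nAw : w \notin 'L_2(G).
  apply/negP=> Aw; case/negP: n4z; rewrite zE.
  have /commgP/eqP -> : commute c w by apply: (centsP abA).
  by rewrite mulg1.
pose M := (<[z]> <*> 'L_4(G))%G.
have sML3 : M \subset 'L_3(G) by rewrite join_subG cycle_subG L3z sLS.
have sMG : M \subset G := subset_trans sML3 (sL 3).
have MC : M \subset 'C(G) by rewrite join_subG cycle_subG zCG L4c.
have nMG : G \subset 'N(M).
  by rewrite normsY ?nL // cents_norm // centsC cycle_subG zCG.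
have pL4M : 'L_4(G) \proper M.
  apply/properP; split; first exact: joing_subr.
  by exists z => //; apply: (subsetP (joing_subl _ _)); rewrite cycle_id.
have nz1 : z != 1 by apply: contraNneq n4z => ->; exact: group1.
have iML4 : #|M : 'L_4(G)| = p.
  have d1 : p %| #|M : 'L_4(G)| := p_dvd_idx pr_p cardG pL4M sMG.
  have d2 : #|M : 'L_4(G)| %| p.
    rewrite -card_quotient ?(subset_trans sMG (nL 4)) //.
    rewrite quotientYidr ?cycle_subG ?(subsetP (nL 4)) // quotient_cycle ?(subsetP (nL 4)) //.
    apply: dvdn_trans (morph_order (coset_morphism 'L_4(G)) (subsetP (nL 4) z Gz)) _.
    by rewrite (abelem_order_p abL2 Az nz1).
  by apply/eqP; rewrite eqn_dvd d2 d1.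
have iL3M : #|'L_3(G) : M| = p.
  have := Lagrange_index sML3 (proper_sub pL4M); rewrite iML4 iL34 => E.
  by apply/eqP; rewrite -(eqn_pmul2r p0) E mulnn.
have [u L3u nMu] : exists2 u, u \in 'L_3(G) & u \notin M.
  by apply/subsetPn; rewrite -indexg_eq1 iL3M; apply/eqP => p_1; move: p1; rewrite p_1.
have fU : 'L_3(G) \subset <[u]> * M := fill pr_p iL3M sML3 (subset_trans (sL 3) nMG) L3u nMu.
have [s Gs us] := psi_elt sAG nAG abA Ac (nL 4) hcC fA (sLS 2%N) sAG (sL 3) s34 L3u.
case/rcosetP: us => l' L4l' uE.
have uw : [~ u, w] = 1.
  rewrite uE commMgJ (Gl _ L4l' _ Gw) conj1g mul1g.
  rewrite (comm_swap sAG nAG abA Ac Gs Gw (mem_commg Gs Gw)).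
  have -> : [~ c, w] = l^-1 * z by rewrite zE mulKg.
  by rewrite commMgJ (Gl _ (groupVr L4l) _ Gs) conj1g mul1g zcomm.
have Au : u \in 'L_2(G) := subsetP (sLS 2%N) u L3u.
have hcU g h : g \in G -> h \in G -> [~ u, g, h] \in 'L_5(G).
  by move=> Gg Gh; apply: mem_commg (mem_commg L3u Gg) Gh.
pose B := (<[w]> <*> 'L_2(G))%G.
have pAB : 'L_2(G) \proper B.
  apply/properP; split; first exact: joing_subr.
  by exists w => //; apply: (subsetP (joing_subl _ _)); rewrite cycle_id.
have sBG : B \subset G by rewrite join_subG cycle_subG Gw sAG.
have sBk : B \subset 'ker (psi_morphism sAG nAG abA Au (nL 5) hcU).
  rewrite join_subG (psi_ker sAG nAG abA Au (nL 5) hcU) andbT cycle_subG.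
  apply/kerP => //=; rewrite /psi uw; exact: coset_id (group1 _).
have MC' : [~: M, G] \subset 'L_5(G) by rewrite (commG1P MC) sub1G.
have : #|'L_4(G) / 'L_5(G)| <= #|G : B|.
  exact: (@psi_card _ _ _ _ _ sAG nAG abA Au (nL 5) hcU _ _ _ fU (subset_trans sML3 (sLS 2%N)) (sL 3) sMG MC' (joing_subr _ _) sBk sBG).
rewrite card_quotient ?(subset_trans (sL 4) (nL 5)) // L5' indexg1 cL4 => le.
have := leq_trans le (idx_le pr_p cardG iA pAB sBG).
by rewrite -{2}(expn1 p) leq_exp2l.
Qed.
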